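(* Let $R$ be a ring with unity and involution $*$, and let $a,b,c\in R$. Then $a$ is left dual $(b,c)$-core invertible if and only if $ab$ is left $(b^*,c)$-invertible. In this case, an element $x\in R$ is a left dual $(b,c)$-core inverse of $a$ if and only if $x$ is a left $(b^*,c)$-inverse of $ab$.
   Context: For $u,b,c\in R$, $u$ is left dual $(b,c)$-core invertible if there exists $x\in Rc$ with $bxub=b$ and $(xub)^*=xub$; such $x$ is a left dual $(b,c)$-core inverse of $u$. $u$ is left $(b,c)$-invertible if there exists $x\in Rc$ with $xub=b$ (equivalently $b\in Rcub$); such $x$ is a left $(b,c)$-inverse of $u$. *)

(* Defs.v *)
From mathcomp Require Import all_boot all_algebra.
Set Implicit Arguments. Unset Strict Implicit. Unset Printing Implicit Defensive.
Import GRing.Theory.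
Local Open Scope ring_scope.

Definition is_involution (R : pzRingType) (star : R -> R) : Prop :=
  [/\ forall x y, star (x + y) = star x + star y,
      forall x y, star (x * y) = star y * star x
    & forall x, star (star x) = x].

Definition in_Rc (R : pzRingType) (c x : R) : Prop := exists r : R, x = r * c.

Definition left_dual_bc_core_inverse (R : pzRingType) (star : R -> R)
  (u b c x : R) : Prop :=
  [/\ in_Rc c x, b * x * u * b = b & star (x * u * b) = x * u * b].

Definition left_dual_bc_core_invertible (R : pzRingType) (star : R -> R)
  (u b c : R) : Prop := exists x, left_dual_bc_core_inverse star u b c x.

Definition left_bc_inverse (R : pzRingType) (u b c x : R) : Prop :=
  in_Rc c x /\ x * u * b = b.

Definition left_bc_invertible (R : pzRingType) (u b c : R) : Prop :=
  exists x, left_bc_inverse u b c x.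

(* Main.v *)
Require Import Defs.
From mathcomp Require Import all_boot all_algebra.
Local Open Scope ring_scope.
Import GRing.Theory.

Lemma key (R : pzRingType) (star : R -> R) (a b c x : R) :
  is_involution star ->
  (left_dual_bc_core_inverse star a b c x <->
                 left_bc_inverse (a * b) (star b) c x).
Proof.
case=> sD sM sK; split.
- case=> Hc H1 H2; split=> //.
  by rewrite mulrA -{1}H2 -sM !mulrA H1.
- case=> Hc; rewrite mulrA => H; have Hp : star (x * a * b) = x * a * b * star (x * a * b).
    by rewrite {2}sM mulrA H -sM.
  have Hs : star (x * a * b) = x * a * b.
    by rewrite Hp -{1}(sK (x * a * b)) -{3}(sK (x*a*b)) -sM sK -Hp sK.
  split=> //.
  have := congr1 star H; rewrite sM sK Hs !mulrA; exact.
Qed.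

Theorem theorem3p11 (R : pzRingType) (star : R -> R) (a b c : R) :
  is_involution star ->
  (left_dual_bc_core_invertible star a b c <->
     left_bc_invertible (a * b) (star b) c) /\
  (forall x : R, left_dual_bc_core_inverse star a b c x <->
                 left_bc_inverse (a * b) (star b) c x).
Proof.
move=> Hi; split; last by move=> x; apply: key.
split; case=> x Hx; exists x; by apply (@key R star a b c x Hi).
Qed.
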